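(* Let $G=(V,E)$ be any finite simple graph and $\alpha\in\mathbb R$. For any self-avoiding path or cycle $\gamma \subset G$, $$\frac{Z(V \setminus \gamma)}{Z(V)} \leq \left( \frac{1}{1 + e^{- 2 \alpha}} \right)^{ \|\gamma \|/2},$$ where $V\setminus\gamma$ denotes $V$ minus the vertex set of $\gamma$ and $\|\gamma\|$ is the number of edges of $\gamma$.
   Context: For $U\subset V$, consider the subgraph induced by $U$ (vertices $U$, edges of $E$ with both endpoints in $U$). A permutation on $U$ is a bijection $\pi:U\to U$ with $\pi(x)=x$ or $\{x,\pi(x)\}\in E$ for all $x$; $\mathcal S_U$ is the set of them, and $Z(U)=\sum_{\pi\in\mathcal S_U}\exp(-\alpha\sum_{x\in U}\mathbb 1\{\pi(x)\neq x\})$, with $Z(\emptyset)=1$. A self-avoiding path is a finite directed subgraph with vertices enumerated $x^1,\dots,x^n$ and edges $(x^i,x^{i+1})$, $1\le i\le n-1$; a cycle additionally has the edge $(x^n,x^1)$. *)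

(* Defs.v *)
From HB Require Import structures.
From mathcomp Require Import all_boot all_order all_algebra fingroup perm.
From mathcomp Require Import reals.
From mathcomp.analysis Require Import sequences exp.
Set Implicit Arguments. Unset Strict Implicit. Unset Printing Implicit Defensive.
Import Order.TTheory GRing.Theory Num.Theory.
Local Open Scope ring_scope.

(* A finite simple graph: vertex set = the finType T, edge relation e,
   assumed symmetric and irreflexive in the theorem. *)

(* pi is a "permutation on U": a bijection of U (encoded as a permutation of T
   fixing every vertex outside U) such that pi x = x or {x, pi x} is an edge. *)
Definition perm_on_graph (T : finType) (e : rel T) (U : {set T}) (pi : {perm T}) : bool :=
  [forall x, (x \notin U) ==> (pi x == x)] &&
  [forall x, (x \in U) ==> ((pi x == x) || e x (pi x))].

Definition Zpart (R : realType) (T : finType) (e : rel T) (alpha : R) (U : {set T}) : R :=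
  \sum_(pi : {perm T} | perm_on_graph e U pi)
     expR (- alpha * (\sum_(x in U) (pi x != x)%:R)).

(* self-avoiding path x^1 ... x^n (n >= 1), with n-1 edges *)
Definition sa_path (T : finType) (e : rel T) (s : seq T) : bool :=
  uniq s && (if s is x :: p then path e x p else false).

(* self-avoiding cycle x^1 ... x^n (n >= 1), edges (x^i,x^{i+1}) and (x^n,x^1);
   it has n edges *)
Definition sa_cycle (T : finType) (e : rel T) (s : seq T) : bool :=
  uniq s && (s != [::]) && path.cycle e s.

(* Main.v *)
Require Import Defs.
From HB Require Import structures.
From mathcomp Require Import all_boot all_order all_algebra fingroup perm.
From mathcomp Require Import reals.
From mathcomp.analysis Require Import sequences exp.
From mathcomp Require Import ring lra zify.
Import Order.TTheory GRing.Theory Num.Theory.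
Local Open Scope ring_scope.
Set Implicit Arguments. Unset Strict Implicit. Unset Printing Implicit Defensive.
Definition pp (R : realType) (t : R) : nat -> R :=
  fix f n := match n with
  | 0 => 1
  | m.+1 => match m with 0 => 1 | k.+1 => f m + t * f k end
  end.



Lemma ppSS (R : realType) (t : R) n : pp t n.+2 = pp t n.+1 + t * pp t n.
Proof. by []. Qed.

Lemma pp_props (R : realType) (t : R) : 0 <= t -> forall n,
  [/\ 0 <= pp t n, pp t n <= pp t n.+1, (1 + t) ^+ n./2 <= pp t n & t ^+ n./2 <= pp t n] /\
  [/\ 0 <= pp t n.+1, pp t n.+1 <= pp t n.+2, (1 + t) ^+ n.+1./2 <= pp t n.+1 & t ^+ n.+1./2 <= pp t n.+1].
Proof.
move=> t0; elim=> [|n [[h0 h1 h2 h3] [h0' h1' h2' h3']]].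
  rewrite /= !expr0; split; split; rewrite ?lexx ?ler01 //; nra.
split; first by split.
have e2 : n.+2./2 = (n./2).+1 by [].
rewrite ppSS e2 !exprS; split.
- nra.
- rewrite ppSS ppSS; nra.
- nra.
- nra.
Qed.
Definition DD (R : realType) (t u : R) (j : nat) : R :=
  pp t (j.*2.+2) + 2 * t * pp t (j.*2.+1) + 2 * u ^+ (j.*2.+3).



Lemma DD_ge (R : realType) (u : R) : 0 <= u -> forall j,
  (1 + u ^+ 2) ^+ j * DD (u ^+ 2) u 0 <= DD (u ^+ 2) u j.
Proof.
move=> u0; set t := u ^+ 2.
have t0 : 0 <= t by rewrite /t; nra.
elim=> [|j IH]; first by rewrite expr0 mul1r.
have [[hA0 _ _ hA] [hB0 _ _ hB]] := @pp_props R t t0 (j.*2).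
have e1 : (j.*2)./2 = j by rewrite -[RHS](half_double j).
have e2 : (j.*2.+1)./2 = j by rewrite /= uphalf_double.
rewrite e1 in hA; rewrite e2 in hB.
set X := t ^+ j in hA hB.
have X0 : 0 <= X by rewrite /X exprn_ge0.
have hu1 : u ^+ (j.*2.+3) = u ^+ 3 * X.
  by rewrite /X /t -exprM -exprD; congr (_ ^+ _); rewrite -muln2; lia.
have hu2 : u ^+ (j.+1.*2.+3) = u ^+ 5 * X.
  by rewrite /X /t -exprM -exprD; congr (_ ^+ _); rewrite -!muln2; lia.
have key : (1 + t) * DD t u j <= DD t u j.+1.
  rewrite /DD hu1 hu2 doubleS !ppSS.
  set A := pp t (j.*2) in hA hA0 *; set B := pp t (j.*2.+1) in hB hB0 *.
  have h : 0 <= X * u ^+ 2 * ((1 - u) ^+ 2 + u ^+ 2) by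
    apply: mulr_ge0; [apply: mulr_ge0 => //; nra | nra].
  rewrite -subr_ge0.
  have hu5 : u ^+ 5 = t * u ^+ 3 by rewrite /t; ring.
  rewrite hu5.
  have h1 : t * X <= t * B by apply: ler_wpM2l.
  have h2 : 2 * t ^+ 2 * X <= 2 * t ^+ 2 * A by apply: ler_wpM2l => //; rewrite mulr_ge0 // exprn_ge0.
  have E : X * u ^+ 2 * ((1 - u) ^+ 2 + u ^+ 2) = t * X + 2 * t ^+ 2 * X - 2 * u ^+ 3 * X by rewrite /t; ring.
  rewrite E in h.
  lra.
rewrite exprS -mulrA; apply: le_trans key.
by apply: ler_wpM2l => //; rewrite addr_ge0.
Qed.
Definition wt (R : realType) (T : finType) (alpha : R) (U : {set T}) (pi : {perm T}) : R :=
  expR (- alpha * (\sum_(x in U) (pi x != x)%:R)).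

Definition agree (T : finType) (S : {set T}) (sg pi : {perm T}) : bool :=
  [forall x in S, pi x == sg x].

Definition conflict (T : finType) (a b : {set T} * {perm T}) : bool :=
  [exists x in a.1 :&: b.1, a.2 x != b.2 x].

Lemma ZpartE (R : realType) (T : finType) (e : rel T) (alpha : R) U :
  Zpart e alpha U = \sum_(pi | perm_on_graph e U pi) wt alpha U pi.
Proof. by []. Qed.

Lemma wt_ge0 (R : realType) (T : finType) (alpha : R) (U : {set T}) pi : 0 <= wt alpha U pi.
Proof. exact: expR_ge0. Qed.

Lemma sum_sub (R : realType) (I : finType) (A : {set I}) (Q : pred I) (f : I -> R) :
  (forall i, i \in A -> Q i) -> (forall i, 0 <= f i) ->
  \sum_(i in A) f i <= \sum_(i | Q i) f i.
Proof.
move=> AQ f0; rewrite [X in _ <= X](bigID (mem A)) /=.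
rewrite (@eq_bigl _ _ _ _ _ (fun i => Q i && (i \in A)) (mem A)).
  by rewrite lerDl sumr_ge0.
move=> i /=; case: (boolP (i \in A)) => [/AQ -> //|_]; by rewrite andbF.
Qed.

Lemma Zpart_gt0 (R : realType) (T : finType) (e : rel T) (alpha : R) U :
  0 < Zpart e alpha U.
Proof.
have h1 : perm_on_graph e U 1%g.
  by apply/andP; split; apply/forallP => x; rewrite perm1 eqxx ?implybT.
rewrite ZpartE (bigD1 1%g) //=.
apply: ltr_wpDr; first by apply: sumr_ge0 => i _; apply: wt_ge0.
exact: expR_gt0.
Qed.

Lemma family_ge (R : realType) (T : finType) (e : rel T) (alpha : R) (U S : {set T}) (sg : {perm T}) :
  S \subset U -> perm_on_graph e S sg ->
  wt alpha S sg * Zpart e alpha (U :\: S) <=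
  \sum_(pi | perm_on_graph e U pi && agree S sg pi) wt alpha U pi.
Proof.
move=> SU /andP[/forallP sg_out /forallP sg_in].
rewrite ZpartE mulr_sumr.
set A := [set pi | perm_on_graph e (U :\: S) pi].
rewrite (@eq_bigl _ _ _ _ _ _ (mem A)); last by move=> pi; rewrite /= inE.
have key : forall pi, pi \in A -> [/\ perm_on_graph e U (pi * sg)%g, agree S sg (pi * sg)%g
     & wt alpha S sg * wt alpha (U :\: S) pi = wt alpha U (pi * sg)%g].
  move=> pi; rewrite inE => /andP[/forallP pout /forallP pin].
  have fixS : forall x, x \in S -> pi x = x.
    by move=> x xS; apply/eqP; apply: (implyP (pout x)); rewrite inE xS.
  have notS : forall x, x \notin S -> pi x \notin S.
    move=> x xS; apply/negP => pxS; move: (fixS _ pxS) => /perm_inj hx.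
    by rewrite hx in pxS; rewrite pxS in xS.
  have rS : forall x, x \in S -> (pi * sg)%g x = sg x by move=> x xS; rewrite permM fixS.
  have rnS : forall x, x \notin S -> (pi * sg)%g x = pi x.
    by move=> x xS; rewrite permM; apply/eqP; apply: (implyP (sg_out (pi x))); apply: notS.
  split.
  - apply/andP; split; apply/forallP => x; apply/implyP => xU.
      have xS : x \notin S by apply: contra xU; apply: (subsetP SU).
      rewrite rnS //; apply: (implyP (pout x)); by rewrite inE negb_and xU orbT.
    case: (boolP (x \in S)) => xS; first by rewrite rS //; apply: (implyP (sg_in x)).
    rewrite rnS //; apply: (implyP (pin x)); by rewrite inE xS xU.
  - by apply/forallP => x; apply/implyP => xS; rewrite rS.
  - rewrite /wt -expRD -mulrDr [in RHS](big_setID S) /= (setIidPr SU).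
    congr expR; congr (_ * _); congr (_ + _).
      by apply: eq_bigr => x xS; rewrite rS.
    by apply: eq_bigr => x; rewrite inE => /andP[xS _]; rewrite rnS.
rewrite (eq_bigr (fun pi => wt alpha U (pi * sg)%g)); last by move=> pi /key[].
rewrite -(big_imset _ (h := fun pi => (pi * sg)%g)); last by move=> p1 p2 _ _; apply: mulIg.
apply: sum_sub; last by move=> ?; apply: wt_ge0.
by move=> rho /imsetP[pi /key[h1 h2 _] ->]; rewrite h1 h2.
Qed.
Lemma conflict_agree (T : finType) (a b : {set T} * {perm T}) pi :
  conflict a b -> agree a.1 a.2 pi -> agree b.1 b.2 pi -> False.
Proof.
case/exists_inP => x; rewrite inE => /andP[xa xb] neq /forall_inP ha /forall_inP hb.
by move: neq; rewrite -(eqP (ha x xa)) -(eqP (hb x xb)) eqxx.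
Qed.

Lemma sum_fam_disj (R : realType) (T : finType) (f : {perm T} -> R)
    (l : seq ({set T} * {perm T})) :
  (forall pi, 0 <= f pi) -> pairwise (@conflict T) l ->
  forall Q : pred {perm T},
  \sum_(a <- l) \sum_(pi | Q pi && agree a.1 a.2 pi) f pi <= \sum_(pi | Q pi) f pi.
Proof.
move=> f0; elim: l => [|a l IH] /=.
  by move=> _ Q; rewrite big_nil sumr_ge0.
move=> /andP[/allP ca pl] Q.
rewrite big_cons [X in _ <= X](bigID (agree a.1 a.2)) /= lerD2l.
apply: le_trans (IH pl (fun pi => Q pi && ~~ agree a.1 a.2 pi)).
rewrite le_eqVlt; apply/orP; left; apply/eqP.
apply: eq_big_seq => b bl; apply: eq_bigl => pi.
case: (boolP (agree b.1 b.2 pi)) => hb; rewrite ?andbF //.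
have hna : ~~ agree a.1 a.2 pi.
  by apply/negP => ha; apply: (conflict_agree (ca b bl) ha hb).
by rewrite hna !andbT.
Qed.

Lemma sum_families (R : realType) (T : finType) (e : rel T) (alpha : R) (U : {set T}) l :
  pairwise (@conflict T) l ->
  all (fun a : {set T} * {perm T} => (a.1 \subset U) && perm_on_graph e a.1 a.2) l ->
  \sum_(a <- l) wt alpha a.1 a.2 * Zpart e alpha (U :\: a.1) <= Zpart e alpha U.
Proof.
move=> pl /allP al.
apply: le_trans (sum_fam_disj (fun pi => wt_ge0 alpha U pi) pl (fun pi => perm_on_graph e U pi)).
rewrite big_seq [X in _ <= X]big_seq; apply: ler_sum => a /al /andP[h1 h2].
exact: family_ge.
Qed.

Lemma setD_split (T : finType) (W A : {set T}) (s q : seq T) :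
  (forall v, (v \in s) = (v \in A) || (v \in q)) ->
  (forall v, v \in q -> v \notin A) -> (forall v, v \in A -> v \notin W) ->
  (W :|: [set v in s]) :\: A = W :|: [set v in q].
Proof.
move=> hs hq hW; apply/setP => v; rewrite !inE hs.
have := hq v; have := hW v.
case: (boolP (v \in A)) => hA; case: (boolP (v \in q)) => hQ;
  case: (boolP (v \in W)) => hw; rewrite /= ?orbT ?orbF //; move=> h1 h2; first [by have := h1 isT | by have := h2 isT].
Qed.

Lemma subset_split (T : finType) (W A : {set T}) (s q : seq T) :
  (forall v, (v \in s) = (v \in A) || (v \in q)) -> A \subset W :|: [set v in s].
Proof. by move=> hs; apply/subsetP => v vA; rewrite !inE hs vA orbT. Qed.

Lemma wt_id (R : realType) (T : finType) (alpha : R) (S : {set T}) : wt alpha S 1%g = 1.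
Proof. by rewrite /wt big1 ?mulr0 ?expR0 // => x _; rewrite perm1 eqxx. Qed.

Lemma wt_all (R : realType) (T : finType) (alpha : R) (S : {set T}) (sg : {perm T}) :
  (forall x, x \in S -> sg x != x) -> wt alpha S sg = expR (- alpha) ^+ #|S|.
Proof.
move=> h; rewrite /wt (eq_bigr (fun _ => 1)) => [|x xS]; last by rewrite h.
by rewrite sumr_const -expRM_natr.
Qed.

Lemma valid_id (T : finType) (e : rel T) S : perm_on_graph e S 1%g.
Proof. by apply/andP; split; apply/forallP => x; rewrite perm1 eqxx ?implybT. Qed.

Lemma valid_tperm (T : finType) (e : rel T) (e_sym : symmetric e) x y :
  e x y -> perm_on_graph e [set x; y] (tperm x y).
Proof.
move=> exy; apply/andP; split; apply/forallP => v; apply/implyP; rewrite !inE.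
  by rewrite negb_or => /andP[vx vy]; rewrite tpermD // eq_sym.
case/orP => /eqP ->; first by rewrite tpermL exy orbT.
by rewrite tpermR e_sym exy orbT.
Qed.

Lemma moved_tperm (T : finType) (x y : T) : x != y ->
  forall v, v \in [set x; y] -> tperm x y v != v.
Proof.
move=> xy v; rewrite !inE => /orP[] /eqP ->; first by rewrite tpermL eq_sym.
by rewrite tpermR.
Qed.

Definition nextp (T : finType) (s : seq T) (Us : uniq s) : {perm T} :=
  perm (can_inj (prev_next Us)).
Definition prevp (T : finType) (s : seq T) (Us : uniq s) : {perm T} :=
  perm (can_inj (next_prev Us)).

Lemma nextpE (T : finType) (s : seq T) (Us : uniq s) v : nextp Us v = next s v.
Proof. by rewrite permE. Qed.
Lemma prevpE (T : finType) (s : seq T) (Us : uniq s) v : prevp Us v = prev s v.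
Proof. by rewrite permE. Qed.

Lemma valid_next (T : finType) (e : rel T) (s : seq T) (Us : uniq s) :
  path.cycle e s -> perm_on_graph e [set v in s] (nextp Us).
Proof.
move=> cs; apply/andP; split; apply/forallP => v; apply/implyP; rewrite inE nextpE => vs.
  by rewrite next_nth (negbTE vs).
by rewrite (next_cycle cs vs) orbT.
Qed.

Lemma valid_prev (T : finType) (e : rel T) (e_sym : symmetric e) (s : seq T) (Us : uniq s) :
  path.cycle e s -> perm_on_graph e [set v in s] (prevp Us).
Proof.
move=> cs; apply/andP; split; apply/forallP => v; apply/implyP; rewrite inE prevpE => vs.
  by rewrite prev_nth (negbTE vs).
by rewrite e_sym (prev_cycle cs vs) orbT.
Qed.

Lemma moved_of_valid (T : finType) (e : rel T) (e_irr : irreflexive e) S sg :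
  perm_on_graph e S sg -> S != set0 -> (forall v, v \in S -> e v (sg v)) ->
  forall v, v \in S -> sg v != v.
Proof.
move=> _ _ h v vS; apply/eqP => hv; move: (h v vS); by rewrite hv e_irr.
Qed.
Arguments pp : simpl never.

Lemma expR2 (R : realType) (alpha : R) : expR (-2 * alpha) = expR (- alpha) ^+ 2.
Proof. by rewrite -expRM_natl; congr expR; ring. Qed.

Lemma Zpart_set0 (R : realType) (T : finType) (e : rel T) (alpha : R) (W : {set T}) :
  Zpart e alpha (W :|: [set v in [::]]) = Zpart e alpha W.
Proof. by congr Zpart; apply/setP => v; rewrite !inE orbF. Qed.

Lemma path_bound (R : realType) (T : finType) (e : rel T) (e_sym : symmetric e) (alpha : R)
   (W : {set T}) (q : seq T) :
  uniq q -> sorted e q -> (forall v, v \in q -> v \notin W) ->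
  pp (expR (-2 * alpha)) (size q) * Zpart e alpha W <= Zpart e alpha (W :|: [set v in q]).
Proof.
move: q; suff H : forall n q, (size q <= n)%N -> uniq q -> sorted e q ->
    (forall v, v \in q -> v \notin W) ->
    pp (expR (-2 * alpha)) (size q) * Zpart e alpha W <= Zpart e alpha (W :|: [set v in q]).
  by move=> q; apply: H (leqnn _).
elim=> [|n IH] [|x [|y r]] //=.
- by move=> _ _ _ _; rewrite mul1r Zpart_set0.
- by move=> _ _ _ _; rewrite mul1r Zpart_set0.
- move=> _ _ _ hW; rewrite mul1r.
  have hs1 : forall v, (v \in [:: x]) = (v \in [set x]) || (v \in [::]).
    by move=> v; rewrite !inE orbF.
  have := @sum_families R T e alpha (W :|: [set v in [:: x]]) [:: ([set x], 1%g)] isT.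
  rewrite /= (subset_split _ hs1) valid_id big_cons big_nil addr0 /= wt_id mul1r.
  rewrite (setD_split hs1) ?Zpart_set0 //; first by apply.
  by move=> v; rewrite in_set1 => /eqP ->; apply: hW; rewrite inE eqxx.
- move=> szr /andP[xn /andP[yn ur]] /andP[exy pyr] hW.
  have xy : x != y by apply: contraNneq xn => ->; rewrite inE eqxx.
  have hs1 : forall v, (v \in [:: x, y & r]) = (v \in [set x]) || (v \in y :: r).
    by move=> v; rewrite !inE.
  have hs2 : forall v, (v \in [:: x, y & r]) = (v \in [set x; y]) || (v \in r).
    by move=> v; rewrite !inE orbA.
  have cf : conflict ([set x], 1%g) ([set x; y], tperm x y).
    by apply/exists_inP; exists x; rewrite /= ?perm1 ?tpermL // !inE eqxx.
  have := @sum_families R T e alpha (W :|: [set v in [:: x, y & r]])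
     [:: ([set x], 1%g); ([set x; y], tperm x y)].
  rewrite /= cf (subset_split _ hs1) (subset_split _ hs2) valid_id valid_tperm //.
  move=> /(_ isT isT).
  rewrite !big_cons big_nil addr0 /= wt_id mul1r (wt_all _ (moved_tperm xy)) cards2 xy.
  rewrite (setD_split hs1); first last.
  + by move=> v; rewrite inE => /eqP ->; apply: hW; rewrite inE eqxx.
  + by move=> v vq; rewrite inE; apply: contraNneq xn => <-.
  rewrite (setD_split hs2); first last.
  + by move=> v; rewrite !inE => /orP[] /eqP ->; apply: hW; rewrite !inE eqxx ?orbT.
  + move=> v vr; rewrite !inE negb_or; apply/andP; split.
      by apply: contraNneq xn => <-; rewrite inE vr orbT.
    by apply: contraNneq yn => <-.
  move=> hZ; apply: le_trans hZ.
  have h1 := IH (y :: r) szr.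
  rewrite /= yn ur pyr in h1.
  have /h1 {}h1 : forall v, v \in y :: r -> v \notin W.
    by move=> v vr; apply: hW; rewrite inE vr orbT.
  have := IH r (ltnW szr) ur (path_sorted pyr).
  have /[swap] /[apply] h2 : forall v, v \in r -> v \notin W.
    by move=> v vr; apply: hW; rewrite !inE vr !orbT.
  rewrite -expR2 ppSS mulrDl; apply: lerD; first exact: h1.
  by rewrite -mulrA; apply: ler_wpM2l => //; apply: expR_ge0.
Qed.
Lemma prev_at_last (T : eqType) (x : T) p : forall y, x \notin p -> prev_at x x y p = last y p.
Proof.
elim: p => [|y' p IH] y /=; first by rewrite eqxx.
rewrite inE negb_or => /andP[/negbTE -> xp]; exact: IH.
Qed.

Arguments conflict : simpl never.
Arguments perm_on_graph : simpl never.
Arguments Zpart : simpl never.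
Arguments wt : simpl never.
Arguments nextp : simpl never.
Arguments prevp : simpl never.

Lemma odd_cycle_bound (R : realType) (T : finType) (e : rel T)
  (e_sym : symmetric e) (e_irr : irreflexive e) (alpha : R) (x y z : T) (m : seq T) j :
  size m = j.*2 -> uniq [:: x, y & rcons m z] -> path.cycle e [:: x, y & rcons m z] ->
  DD (expR (-2 * alpha)) (expR (- alpha)) j * Zpart e alpha (~: [set v in [:: x, y & rcons m z]])
   <= Zpart e alpha [set: T].
Proof.
move=> szm Us cs.
set s := [:: x, y & rcons m z] in Us cs *.
set W := ~: [set v in s].
have hT : [set: T] = W :|: [set v in s].
  by apply/setP => v; rewrite in_setT in_setU in_setC in_set orNb.
have hW : forall v, v \in s -> v \notin W by move=> v vs; rewrite in_setC in_set negbK.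
have Us' := Us; rewrite /s /= rcons_uniq in Us'.
move: Us' => /andP[xn /andP[yn /andP[zm um]]].
have xy : x != y by apply: contraNneq xn => ->; rewrite inE eqxx.
have xz : x != z by apply: contraNneq xn => ->; rewrite !inE mem_rcons inE eqxx !orbT.
have yz : y != z by apply: contraNneq yn => ->; rewrite mem_rcons inE eqxx.
have cs' := cs; rewrite /s /path.cycle /= rcons_path last_rcons in cs'.
move: cs' => /and3P[exy pyz ezx].
have pym := pyz; rewrite rcons_path in pym; move: pym => /andP[pym _].
have nx : next s x = y by rewrite /s /next /= eqxx.
have px : prev s x = z by rewrite /s /prev prev_at_last //= last_rcons.
have ny : next s y != x.
  by apply/eqP => h; have := prev_next Us y; rewrite h px => /eqP; rewrite eq_sym (negbTE yz).
have pz : prev s z != x.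
  by apply/eqP => h; have := next_prev Us z; rewrite h nx => /eqP; rewrite (negbTE yz).
have hs1 : forall v, (v \in s) = (v \in [set x]) || (v \in y :: rcons m z).
  by move=> v; rewrite !inE.
have hs2 : forall v, (v \in s) = (v \in [set x; y]) || (v \in rcons m z).
  by move=> v; rewrite !inE orbA.
have hs3 : forall v, (v \in s) = (v \in [set x; z]) || (v \in y :: m).
  move=> v; rewrite !inE mem_rcons !inE.
  by case: (v == x); case: (v == y); case: (v == z).
have hs4 : forall v, (v \in s) = (v \in [set v in s]) || (v \in [::]).
  by move=> v; rewrite !inE orbF.
pose F1 : {set T} * {perm T} := ([set x], 1%g).
pose F2 : {set T} * {perm T} := ([set x; y], tperm x y).
pose F3 : {set T} * {perm T} := ([set x; z], tperm x z).
pose F4 : {set T} * {perm T} := ([set v in s], nextp Us).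
pose F5 : {set T} * {perm T} := ([set v in s], prevp Us).
have inx2 : forall b, x \in [set x; b] by move=> b; rewrite !inE eqxx.
have ins : forall v, v \in s -> v \in [set v in s] by move=> v; rewrite in_set.
have xs : x \in s by rewrite inE eqxx.
have ys : y \in s by rewrite !inE eqxx orbT.
have zs : z \in s by rewrite !inE mem_rcons inE eqxx !orbT.
have inz2 : forall a b : T, b \in [set a; b] by move=> a b; rewrite !inE eqxx orbT.
have c12 : conflict F1 F2.
  by apply/exists_inP; exists x; [rewrite in_setI in_set1 eqxx inx2 | rewrite /= perm1 tpermL].
have c13 : conflict F1 F3.
  by apply/exists_inP; exists x; [rewrite in_setI in_set1 eqxx inx2 | rewrite /= perm1 tpermL].
have c14 : conflict F1 F4.
  by apply/exists_inP; exists x; [rewrite in_setI in_set1 eqxx ins | rewrite /= perm1 nextpE nx].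
have c15 : conflict F1 F5.
  by apply/exists_inP; exists x; [rewrite in_setI in_set1 eqxx ins | rewrite /= perm1 prevpE px].
have c23 : conflict F2 F3.
  by apply/exists_inP; exists x; [rewrite in_setI !inx2 | rewrite /= !tpermL].
have c24 : conflict F2 F4.
  by apply/exists_inP; exists y; [rewrite in_setI inz2 ins | rewrite /= tpermR nextpE eq_sym].
have c25 : conflict F2 F5.
  by apply/exists_inP; exists x; [rewrite in_setI inx2 ins | rewrite /= tpermL prevpE px].
have c34 : conflict F3 F4.
  by apply/exists_inP; exists x; [rewrite in_setI inx2 ins | rewrite /= tpermL nextpE nx eq_sym].
have c35 : conflict F3 F5.
  by apply/exists_inP; exists z; [rewrite in_setI inz2 ins | rewrite /= tpermR prevpE eq_sym].
have c45 : conflict F4 F5.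
  by apply/exists_inP; exists x; [rewrite in_setI ins | rewrite /= nextpE prevpE nx px].
have pw : pairwise (@conflict T) [:: F1; F2; F3; F4; F5].
  by rewrite !pairwise_cons /= c12 c13 c14 c15 c23 c24 c25 c34 c35 c45.
have := @sum_families R T e alpha (W :|: [set v in s]) [:: F1; F2; F3; F4; F5] pw.
rewrite /=.
have exz : e x z by rewrite e_sym.
rewrite (subset_split _ hs1) (subset_split _ hs2) (subset_split _ hs3) (subset_split _ hs4).
rewrite valid_id (valid_tperm e_sym exy) (valid_tperm e_sym exz) valid_next // valid_prev //.
move=> /(_ isT) hZ.
have mvn : forall v, v \in [set v in s] -> nextp Us v != v.
  move=> v; rewrite in_set nextpE => vs; apply/eqP => h.
  by move: (next_cycle cs vs); rewrite h e_irr.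
have mvp : forall v, v \in [set v in s] -> prevp Us v != v.
  move=> v; rewrite in_set prevpE => vs; apply/eqP => h.
  by move: (prev_cycle cs vs); rewrite h e_irr.
have cs_size : #|[set v in s]| = size s by rewrite cardsE; apply/card_uniqP.
rewrite !big_cons big_nil addr0 /= in hZ.
rewrite wt_id mul1r (wt_all _ (moved_tperm xy)) (wt_all _ (moved_tperm xz)) !cards2 xy xz in hZ.
rewrite (wt_all _ mvn) (wt_all _ mvp) cs_size in hZ.
rewrite -expR2 in hZ.
have hWA : forall A : {set T}, A \subset [set v in s] -> forall v, v \in A -> v \notin W.
  by move=> A /subsetP sA v /sA; rewrite in_set; apply: hW.
rewrite (setD_split hs1) in hZ; first last.
  by apply: hWA; apply/subsetP => v; rewrite in_set1 => /eqP ->; apply: ins.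
  by move=> v vq; rewrite in_set1; apply: contraNneq xn => <-.
rewrite (setD_split hs2) in hZ; first last.
  by apply: hWA; apply/subsetP => v; rewrite in_set2 => /orP[] /eqP ->; apply: ins.
  move=> v vq; rewrite !inE negb_or; apply/andP; split.
    by apply: contraNneq xn => <-; rewrite inE vq orbT.
  by apply: contraNneq yn => <-.
have sub3 : forall v, v \in y :: m -> v \in y :: rcons m z.
  by move=> v; rewrite inE => /orP[/eqP ->|vm]; rewrite !inE ?eqxx // mem_rcons inE vm !orbT.
rewrite (setD_split hs3) in hZ; first last.
  by apply: hWA; apply/subsetP => v; rewrite in_set2 => /orP[] /eqP ->; apply: ins.
  move=> v vq; rewrite in_set2 negb_or; apply/andP; split.
    by apply/eqP => vx; move: (sub3 _ vq); rewrite vx (negbTE xn).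
  apply/eqP => vz; move: vq; rewrite vz inE (negbTE zm) orbF => /eqP zy.
  by rewrite zy eqxx in yz.
rewrite (setD_split hs4) ?Zpart_set0 in hZ; first last.
  by apply: hWA.
  by move=> v; rewrite in_nil.
rewrite hT; apply: le_trans hZ.
have u1 : uniq (y :: rcons m z) by move: (Us) => /andP[].
have u2 : uniq (rcons m z) by move: u1 => /andP[].
have u3 : uniq (y :: m).
  by rewrite /= um andbT; apply: contra yn; rewrite mem_rcons inE => ->; rewrite orbT.
have nW : forall q : seq T, {subset q <= s} -> forall v, v \in q -> v \notin W.
  by move=> q sq v /sq; apply: hW.
have b1 := @path_bound R T e e_sym alpha W (y :: rcons m z) u1 pyz.
have /b1 {}b1 : forall v, v \in y :: rcons m z -> v \notin W.
  by apply: nW => v vq; rewrite inE vq orbT.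
have b2 := @path_bound R T e e_sym alpha W (rcons m z) u2 (path_sorted pyz).
have /b2 {}b2 : forall v, v \in rcons m z -> v \notin W.
  by apply: nW => v vq; rewrite !inE vq !orbT.
have b3 := @path_bound R T e e_sym alpha W (y :: m) u3 pym.
have /b3 {}b3 : forall v, v \in y :: m -> v \notin W.
  by apply: nW => v /sub3 vq; rewrite inE vq orbT.
rewrite /= size_rcons szm in b1 b2; rewrite /= szm in b3.
have -> : size s = j.*2.+3 by rewrite /s /= size_rcons szm.
rewrite /DD.
have t0 : 0 <= expR (-2 * alpha) := expR_ge0 _.
have := ler_wpM2l t0 b2; have := ler_wpM2l t0 b3.
set t := expR (-2 * alpha); set U := expR (- alpha) ^+ j.*2.+3.
set Z := Zpart e alpha W.
move: b1; set A := pp t j.*2.+2; set B := pp t j.*2.+1 => b1 h3 h2.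
rewrite -/Z in b1.
lra.
Qed.
Lemma half_pred n : (n.-1 <= (n./2).*2)%N.
Proof. by move: (odd_double_half n); case: (odd n) => /= h; lia. Qed.

Lemma half_even n : ~~ odd n -> (n <= (n./2).*2)%N.
Proof. by move: (odd_double_half n); case: (odd n) => //= h _; lia. Qed.

Lemma e23 j : (j.*2.+3 = (2 * j.+1).+1)%N.
Proof. lia. Qed.

Lemma ratio_le (R : realType) (a b K M : R) :
  0 < a -> 0 < K -> K * a <= b -> 1 <= K * M -> a / b <= M.
Proof.
move=> a0 K0 hb hKM.
have b0 : 0 < b by apply: lt_le_trans hb; apply: mulr_gt0.
rewrite ler_pdivrMr //.
have M0 : 0 <= M by nra.
nra.
Qed.

Lemma pp0 (R : realType) (t : R) : pp t 0 = 1. Proof. by []. Qed.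
Lemma pp1 (R : realType) (t : R) : pp t 1 = 1. Proof. by []. Qed.

Lemma pp_pos (R : realType) (t : R) n : 0 <= t -> 0 < pp t n.
Proof.
move=> t0; have [[_ _ hp _] _] := pp_props t0 n.
apply: lt_le_trans hp; apply: lt_le_trans (exprn_ege1 _ _) => //.
by rewrite lerDl.
Qed.

Theorem proposition3p1 (R : realType) (T : finType) (e : rel T)
  (e_sym : symmetric e) (e_irr : irreflexive e) (alpha : R) (s : seq T) :
  (sa_path e s ->
     Zpart e alpha (~: [set x in s]) / Zpart e alpha [set: T]
       <= ((1 + expR (-2 * alpha))^-1) `^ ((size s).-1%:R / 2)) /\
  (sa_cycle e s ->
     Zpart e alpha (~: [set x in s]) / Zpart e alpha [set: T]
       <= ((1 + expR (-2 * alpha))^-1) `^ ((size s)%:R / 2)).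
Proof.
have u0 : 0 <= expR (- alpha) := expR_ge0 _.
have t0 : 0 <= expR (-2 * alpha) := expR_ge0 _.
have t1 : 0 < 1 + expR (-2 * alpha) by rewrite ltr_pwDl.
set c := (1 + expR (-2 * alpha))^-1.
have c0 : 0 <= c by rewrite /c invr_ge0 ltW.
set q := Num.sqrt c.
have q0 : 0 <= q := sqrtr_ge0 c.
have qc : q ^+ 2 = c := sqr_sqrtr c0.
have ct : (1 + expR (-2 * alpha)) * c = 1 by rewrite /c mulfV // gt_eqF.
have q1 : q <= 1 by nra.
have hpow : forall k : nat, c `^ (k%:R / 2) = q ^+ k.
  by move=> k; rewrite mulrC powRrM powR12_sqrt // powR_mulrn // sqrtr_ge0.
have evenb : forall n m, (m <= (n./2).*2)%N -> 1 <= pp (expR (-2 * alpha)) n * q ^+ m.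
  move=> n m hm.
  have [[_ _ hp _] _] := pp_props t0 n.
  have hq : c ^+ n./2 <= q ^+ m.
    by rewrite -qc -exprM mul2n; apply: ler_wiXn2l.
  apply: (le_trans (_ : 1 <= ((1 + expR (-2 * alpha)) * c) ^+ n./2)); first by rewrite ct expr1n.
  rewrite exprMn; apply: ler_pM; [exact: exprn_ge0 (ltW t1) | exact: exprn_ge0 c0 | exact: hp | exact: hq].
set W := ~: [set x in s].
have hT : [set: T] = W :|: [set v in s].
  by apply/setP => v; rewrite in_setT in_setU in_setC in_set orNb.
have hW : forall v, v \in s -> v \notin W by move=> v vs; rewrite in_setC in_set negbK.
have ZW : 0 < Zpart e alpha W by exact: Zpart_gt0.
split.
- move=> /andP[Us ps].
  have ss : sorted e s by move: ps; case: (s).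
  have sz : (0 < size s)%N by move: ps; case: (s).
  have hZ := path_bound e_sym alpha Us ss hW; rewrite -hT in hZ.
  rewrite hpow; apply: (ratio_le ZW (pp_pos _ t0) hZ).
  apply: evenb; exact: half_pred.
- move=> /andP[/andP[Us sne] cs].
  case/boolP: (odd (size s)) => hodd; last first.
    have ss : sorted e s.
      by move: cs; case: (s) => // x p; rewrite /path.cycle rcons_path => /andP[].
    have hZ := path_bound e_sym alpha Us ss hW; rewrite -hT in hZ.
    rewrite hpow; apply: (ratio_le ZW (pp_pos _ t0) hZ).
    apply: evenb; exact: half_even.
  have [x [y [m [z Es]]]] : exists x y m z, s = [:: x, y & rcons m z].
    move: hodd cs; case: (s) => [|x [|y r]] //=.
      by rewrite /path.cycle /= e_irr.
    by case/lastP: r => [|r z] // _ _; exists x, y, r, z.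
  have Us' : uniq [:: x, y & rcons m z] by rewrite -Es.
  have cs' : path.cycle e [:: x, y & rcons m z] by rewrite -Es.
  have {}hodd : ~~ odd (size m) by move: hodd; rewrite Es /= size_rcons /= negbK.
  have szm : size m = (size m)./2.*2.
    by rewrite -[in LHS](odd_double_half (size m)) (negbTE hodd).
  set j := (size m)./2 in szm.
  have hZ := odd_cycle_bound e_sym e_irr alpha szm Us' cs'.
  rewrite -Es -/W in hZ.
  have sz : size s = j.*2.+3 by rewrite Es /= size_rcons szm.
  rewrite sz hpow; apply: (ratio_le ZW _ hZ).
    rewrite /DD; apply: ltr_wpDr.
      by apply: mulr_ge0 => //; apply: exprn_ge0.
    apply: ltr_wpDr; last exact: pp_pos.
    by apply: mulr_ge0; [apply: mulr_ge0 | apply: ltW; apply: pp_pos].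
  rewrite expR2 in ct *.
  set u := expR (- alpha) in u0 ct *.
  have hD := DD_ge u0 j.
  have D0E : DD (u ^+ 2) u 0 = 1 + 3 * u ^+ 2 + 2 * u ^+ 3.
    by rewrite /DD /= ppSS pp0 pp1; ring.
  rewrite D0E in hD.
  set D0 := 1 + 3 * u ^+ 2 + 2 * u ^+ 3 in hD.
  have hsq : (1 + u ^+ 2) ^+ 3 <= D0 ^+ 2.
    rewrite -subr_ge0.
    have -> : D0 ^+ 2 - (1 + u ^+ 2) ^+ 3 =
       3 * u ^+ 2 + 4 * u ^+ 3 + 6 * u ^+ 4 + 12 * u ^+ 5 + 3 * u ^+ 6 by rewrite /D0; ring.
    by rewrite !addr_ge0 // mulr_ge0 // exprn_ge0.
  have D00 : 0 <= D0 by rewrite /D0 !addr_ge0 // mulr_ge0 // exprn_ge0.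
  have base : 1 + u ^+ 2 <= q * D0.
    have X2 : (1 + u ^+ 2) ^+ 2 <= (q * D0) ^+ 2.
      rewrite exprMn qc.
      have -> : (1 + u ^+ 2) ^+ 2 = c * (1 + u ^+ 2) ^+ 3.
        by rewrite exprS mulrA (mulrC c) ct mul1r.
      by apply: ler_wpM2l.
    have Y0 : 0 <= 1 + u ^+ 2 by rewrite addr_ge0 // exprn_ge0.
    have X0 : 0 <= q * D0 by apply: mulr_ge0.
    by rewrite -(@ler_pXn2r _ 2) // nnegrE.
  have qE : q ^+ j.*2.+3 = q * c ^+ j.+1.
    by rewrite -qc -exprM -exprS e23.
  rewrite qE.
  apply: (le_trans (_ : 1 <= ((1 + u ^+ 2) * c) ^+ j.+1)); first by rewrite ct expr1n.
  have P0 : 0 <= (1 + u ^+ 2) ^+ j by rewrite exprn_ge0 // addr_ge0 // exprn_ge0.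
  have C0 : 0 <= c ^+ j.+1 by rewrite exprn_ge0.
  have h1 := ler_wpM2r (mulr_ge0 q0 C0) hD.
  have h2 := ler_wpM2r (mulr_ge0 P0 C0) base.
  rewrite exprMn exprS.
  set P := (1 + u ^+ 2) ^+ j in P0 h1 h2 *.
  set C := c ^+ j.+1 in C0 h1 h2 *.
  set Dj := DD (u ^+ 2) u j in h1 *.
  nra.
Qed.
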